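(* Let $H$ be a self-adjoint complex $2\times2$ matrix and let $L_1,L_2,L_3$ be self-adjoint complex $2\times 2$ matrices, $L_j=\begin{pmatrix} l^{00}_j & l^{01}_j\\ \overline{l^{01}_j} & l^{11}_j\end{pmatrix}$ with $l^{00}_j,l^{11}_j\in\mathbb{R}$, $l^{01}_j\in\mathbb{C}$. Define the vectors $L^0,L^1,L^\delta,L^R,L^I\in\mathbb{R}^3$ by their coordinates $L^0_j=l^{00}_j$, $L^1_j=l^{11}_j$, $L^\delta_j=(l^{11}_j-l^{00}_j)/2$, $L^R_j=\mathrm{Re}\,l^{01}_j$, $L^I_j=\mathrm{Im}\,l^{01}_j$, $j=1,2,3$. Consider the stochastic differential equation for a complex process $w$, with $W=(1,w)$, \[ dw=i[w(HW)_0-(HW)_1]\,dt+\frac12\sum_{j=1}^3[w(L_j^*L_jW)_0-(L_j^*L_jW)_1]\,dt+\sum_{j=1}^3[w(L_jW)_0^2-(L_jW)_0(L_jW)_1]\,dt+\sum_{j=1}^3[(L_jW)_1-w(L_jW)_0]\,dY^j_t, \] where $Y=(Y^1,Y^2,Y^3)$ is a standard three-dimensional Wiener process, and its diffusion operator (generator) acting on functions $S(x,y)$, $w=x+iy$. (i) The second order part of this diffusion operator is isothermic, i.e. has the form $\omega(x,y)\big(\frac{\partial^2S}{\partial x^2}+\frac{\partial^2S}{\partial y^2}\big)$ with some positive function $\omega$, if and only if the vectors $L^\delta,L^R,L^I$ form an orthonormal basis of $\mathbb{R}^3$ up to a common constant multiplier. In this case the second order part coincides, up to a constant multiplier, with $(1+x^2+y^2)^2\big(\frac{\partial^2S}{\partial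 x^2}+\frac{\partial^2S}{\partial y^2}\big)$ (the Laplace–Beltrami operator of the sphere in stereographic coordinates). (ii) For $H=0$, the whole diffusion operator is isothermic (i.e. of the form in (i) with all first order terms vanishing) if and only if $L^\delta,L^R,L^I$ form an orthonormal basis of $\mathbb{R}^3$ up to a common constant multiplier and $L^0=-L^1$. Moreover, under these conditions this diffusion operator coincides with the diffusion operator of the same equation rewritten in terms of the innovation process $dB^j_t=dY^j_t-\langle L_j+L_j^*\rangle_W\,dt$ (with $B$ treated as a standard three-dimensional Wiener process).
   Context: For a vector $v\in\mathbb{C}^2$, $(v)_0,(v)_1$ denote its two coordinates; for a matrix $A$, $\langle A\rangle_W=(W,AW)/(W,W)$ with the standard Hermitian inner product. This SDE is the quantum filtering (Belavkin) equation for a qubit with Hamiltonian $H$ and coupling operators $L_j$, written in the projective coordinate $w=\chi_1/\chi_0$. *)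

(* Defs.v *)
From HB Require Import structures.
From mathcomp Require Import all_boot all_order all_algebra.
From mathcomp Require Import complex.
Set Implicit Arguments. Unset Strict Implicit. Unset Printing Implicit Defensive.
Import Order.TTheory GRing.Theory Num.Theory.
Local Open Scope ring_scope.

Section QF.
Variable R : rcfType.
Local Notation C := R[i].

Definition c0 (v : 'cV[C]_2) : C := v ord0 ord0.
Definition c1 (v : 'cV[C]_2) : C := v ord_max ord0.

Definition adj (A : 'M[C]_2) : 'M[C]_2 := (map_mx (@conjc R) A)^T.
Definition selfadj (A : 'M[C]_2) : Prop := adj A = A.

Definition Wvec (w : C) : 'cV[C]_2 := \col_(i < 2) (if i == ord0 then 1 else w).

Definition hdot (u v : 'cV[C]_2) : C := \sum_(i < 2) conjc (u i ord0) * v i ord0.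
Definition expect (A : 'M[C]_2) (W : 'cV[C]_2) : C := hdot W (A *m W) / hdot W W.

Definition drift (H : 'M[C]_2) (L : 'I_3 -> 'M[C]_2) (w : C) : C :=
  let W := Wvec w in
  'i%C * (w * c0 (H *m W) - c1 (H *m W))
  + 2^-1 * \sum_(j < 3) (w * c0 ((adj (L j) *m L j) *m W) - c1 ((adj (L j) *m L j) *m W))
  + \sum_(j < 3) (w * c0 (L j *m W) ^+ 2 - c0 (L j *m W) * c1 (L j *m W)).

Definition sigma (L : 'I_3 -> 'M[C]_2) (j : 'I_3) (w : C) : C :=
  let W := Wvec w in c1 (L j *m W) - w * c0 (L j *m W).

(* drift of the same equation rewritten with the innovation process
   dB^j = dY^j - <L_j + L_j^*>_W dt, i.e. dY^j = dB^j + <L_j + L_j^*>_W dt *)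
Definition drift_innov (H : 'M[C]_2) (L : 'I_3 -> 'M[C]_2) (w : C) : C :=
  drift H L w + \sum_(j < 3) sigma L j w * expect (L j + adj (L j)) (Wvec w).

(* Second order part of the generator of dw = b dt + sum_j s_j dY^j,
   w = x + i y, applied to a function S whose second derivatives at (x,y)
   are Sxx, Sxy, Syy. *)
Definition second_order (L : 'I_3 -> 'M[C]_2) (x y Sxx Sxy Syy : R) : R :=
  2^-1 * \sum_(j < 3)
     (let s := sigma L j (Complex x y) in
      (complex.Re s) ^+ 2 * Sxx + 2 * complex.Re s * complex.Im s * Sxy
      + (complex.Im s) ^+ 2 * Syy).

(* generator with a given drift function b, applied to a function S whose
   first and second derivatives at (x,y) are Sx, Sy, Sxx, Sxy, Syy *)
Definition generator_b (b : C -> C) (L : 'I_3 -> 'M[C]_2)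
    (x y Sx Sy Sxx Sxy Syy : R) : R :=
  complex.Re (b (Complex x y)) * Sx + complex.Im (b (Complex x y)) * Sy
  + second_order L x y Sxx Sxy Syy.

Definition generator H L := generator_b (drift H L) L.
Definition generator_innov H L := generator_b (drift_innov H L) L.

Definition L0v (L : 'I_3 -> 'M[C]_2) (j : 'I_3) : R := complex.Re (L j ord0 ord0).
Definition L1v (L : 'I_3 -> 'M[C]_2) (j : 'I_3) : R := complex.Re (L j ord_max ord_max).
Definition Ldelta (L : 'I_3 -> 'M[C]_2) (j : 'I_3) : R := (L1v L j - L0v L j) / 2.
Definition LRv (L : 'I_3 -> 'M[C]_2) (j : 'I_3) : R := complex.Re (L j ord0 ord_max).
Definition LIv (L : 'I_3 -> 'M[C]_2) (j : 'I_3) : R := complex.Im (L j ord0 ord_max).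

Definition dot3 (u v : 'I_3 -> R) : R := \sum_(j < 3) u j * v j.

Definition orthonormal_upto (u1 u2 u3 : 'I_3 -> R) : Prop :=
  exists c : R, c != 0 /\
    let v k := fun j => (if k == 0%N then u1 j else if k == 1%N then u2 j else u3 j) / c in
    forall k l : 'I_3, dot3 (v k) (v l) = (k == l)%:R.

Definition second_order_isothermic (L : 'I_3 -> 'M[C]_2) : Prop :=
  exists omega : R -> R -> R, (forall x y, 0 < omega x y) /\
    forall x y Sxx Sxy Syy, second_order L x y Sxx Sxy Syy = omega x y * (Sxx + Syy).

Definition generator_isothermic (H : 'M[C]_2) (L : 'I_3 -> 'M[C]_2) : Prop :=
  exists omega : R -> R -> R, (forall x y, 0 < omega x y) /\
    forall x y Sx Sy Sxx Sxy Syy,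
      generator H L x y Sx Sy Sxx Sxy Syy = omega x y * (Sxx + Syy).

End QF.

(* Main.v *)
Require Import Defs.
From HB Require Import structures.
From mathcomp Require Import all_boot all_order all_algebra.
From mathcomp Require Import complex.
From mathcomp Require Import ring lra.
Import Order.TTheory GRing.Theory Num.Theory.
Set Implicit Arguments. Unset Strict Implicit.
Local Open Scope ring_scope.

Lemma cReD (R : rcfType) (z w : R[i]) : complex.Re (z + w) = complex.Re z + complex.Re w.
Proof. by case: z; case: w. Qed.
Lemma cImD (R : rcfType) (z w : R[i]) : complex.Im (z + w) = complex.Im z + complex.Im w.
Proof. by case: z; case: w. Qed.
Lemma cReN (R : rcfType) (z : R[i]) : complex.Re (- z) = - complex.Re z.
Proof. by case: z. Qed.
Lemma cImN (R : rcfType) (z : R[i]) : complex.Im (- z) = - complex.Im z.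
Proof. by case: z. Qed.
Lemma cReM (R : rcfType) (z w : R[i]) : complex.Re (z * w) = complex.Re z * complex.Re w - complex.Im z * complex.Im w.
Proof. by case: z; case: w. Qed.
Lemma cImM (R : rcfType) (z w : R[i]) : complex.Im (z * w) = complex.Re z * complex.Im w + complex.Im z * complex.Re w.
Proof. by case: z => a b; case: w => c d /=. Qed.
Lemma cReJ (R : rcfType) (z : R[i]) : complex.Re (conjc z) = complex.Re z.
Proof. by case: z. Qed.
Lemma cImJ (R : rcfType) (z : R[i]) : complex.Im (conjc z) = - complex.Im z.
Proof. by case: z. Qed.
Lemma cReC (R : rcfType) (a b : R) : complex.Re (Complex a b) = a. Proof. by []. Qed.
Lemma cImC (R : rcfType) (a b : R) : complex.Im (Complex a b) = b. Proof. by []. Qed.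
Lemma cRe_sum (R : rcfType) n (F : 'I_n -> R[i]) : complex.Re (\sum_(j < n) F j) = \sum_(j < n) complex.Re (F j).
Proof. by elim/big_rec2: _ => // j x y _ <-; rewrite cReD. Qed.
Lemma cIm_sum (R : rcfType) n (F : 'I_n -> R[i]) : complex.Im (\sum_(j < n) F j) = \sum_(j < n) complex.Im (F j).
Proof. by elim/big_rec2: _ => // j x y _ <-; rewrite cImD. Qed.
Lemma cRe1 (R : rcfType) : complex.Re (1 : R[i]) = 1. Proof. by []. Qed.
Lemma cIm1 (R : rcfType) : complex.Im (1 : R[i]) = 0. Proof. by []. Qed.
Lemma cRe0 (R : rcfType) : complex.Re (0 : R[i]) = 0. Proof. by []. Qed.
Lemma cIm0 (R : rcfType) : complex.Im (0 : R[i]) = 0. Proof. by []. Qed.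
Lemma inv2C (R : rcfType) : (2^-1 : R[i]) = Complex (2^-1) 0.
Proof. by rewrite complexr0 fmorphV rmorph_nat. Qed.

Lemma c0M (R : rcfType) (A : 'M[R[i]]_2) v : c0 (A *m v) = A ord0 ord0 * c0 v + A ord0 ord_max * c1 v.
Proof. rewrite /c0 /c1 mxE big_ord_recr big_ord1 /=. by have -> : widen_ord (leqnSn 1) ord0 = ord0 :> 'I_2 by apply/val_inj. Qed.
Lemma c1M (R : rcfType) (A : 'M[R[i]]_2) v : c1 (A *m v) = A ord_max ord0 * c0 v + A ord_max ord_max * c1 v.
Proof. rewrite /c0 /c1 mxE big_ord_recr big_ord1 /=. by have -> : widen_ord (leqnSn 1) ord0 = ord0 :> 'I_2 by apply/val_inj. Qed.
Lemma c0W (R : rcfType) (w : R[i]) : c0 (Wvec w) = 1. Proof. by rewrite /c0 mxE. Qed.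
Lemma c1W (R : rcfType) (w : R[i]) : c1 (Wvec w) = w. Proof. by rewrite /c1 mxE. Qed.

Lemma adjE (R : rcfType) (A : 'M[R[i]]_2) i j : selfadj A -> A i j = conjc (A j i).
Proof. by move=> h; rewrite -{1}h /adj !mxE. Qed.

Lemma E00 (R : rcfType) (A : 'M[R[i]]_2) : selfadj A -> A ord0 ord0 = Complex (complex.Re (A ord0 ord0)) 0.
Proof.
move=> h; have := adjE ord0 ord0 h; case: (A ord0 ord0) => a b [] /= hb.
by have -> : b = 0 by lra.
Qed.
Lemma E11 (R : rcfType) (A : 'M[R[i]]_2) : selfadj A -> A ord_max ord_max = Complex (complex.Re (A ord_max ord_max)) 0.
Proof.
move=> h; have := adjE ord_max ord_max h; case: (A ord_max ord_max) => a b [] /= hb.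
by have -> : b = 0 by lra.
Qed.
Lemma E01 (R : rcfType) (A : 'M[R[i]]_2) : A ord0 ord_max = Complex (complex.Re (A ord0 ord_max)) (complex.Im (A ord0 ord_max)).
Proof. by case: (A ord0 ord_max). Qed.
Lemma E10 (R : rcfType) (A : 'M[R[i]]_2) : selfadj A -> A ord_max ord0 = Complex (complex.Re (A ord0 ord_max)) (- complex.Im (A ord0 ord_max)).
Proof. by move=> h; rewrite (adjE _ _ h); case: (A ord0 ord_max). Qed.

Lemma dotscale (R : rcfType) (u v : 'I_3 -> R) c : c != 0 ->
  dot3 (fun j => u j / c) (fun j => v j / c) = dot3 u v / c ^+ 2.
Proof. move=> hc; rewrite /dot3 !big_ord_recr !big_ord0 /=. field. exact: hc. Qed.

Lemma test (R : rcfType) (a d : R) : 2 * ((d - a) / 2) = d - a.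
Proof. by field. Qed.

Lemma sigma_RI (R : rcfType) (L : 'I_3 -> 'M[R[i]]_2) (hL : forall j, selfadj (L j)) j x y :
 complex.Re (sigma L j (Complex x y)) = (1 - x^+2 + y^+2) * LRv L j + 2*x*Ldelta L j + 2*x*y*LIv L j
 /\ complex.Im (sigma L j (Complex x y)) = -2*x*y*LRv L j + 2*y*Ldelta L j - (1 + x^+2 - y^+2)*LIv L j.
Proof.
rewrite /sigma c0M c1M c0W c1W (E00 (hL j)) (E11 (hL j)) (E10 (hL j)) (E01 (L j)).
rewrite /Ldelta /LRv /LIv /L0v /L1v.
move: (complex.Re _) (complex.Re _) (complex.Re _) (complex.Im _) => a d p q.
rewrite !(cReD, cImD, cReN, cImN, cReM, cImM, cReC, cImC, cRe1, cIm1).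
by split; field.
Qed.

Lemma c0_0 (R : rcfType) : c0 (0 : 'cV[R[i]]_2) = 0. Proof. by rewrite /c0 mxE. Qed.
Lemma c1_0 (R : rcfType) : c1 (0 : 'cV[R[i]]_2) = 0. Proof. by rewrite /c1 mxE. Qed.

Lemma drift0E (R : rcfType) (L : 'I_3 -> 'M[R[i]]_2) (hL : forall j, selfadj (L j)) w :
  drift 0 L w = - \sum_(j < 3) sigma L j w * (2^-1 * (L j ord0 ord0 + L j ord_max ord_max)
      + L j ord0 ord0 + L j ord0 ord_max * w).
Proof.
rewrite /drift mul0mx c0_0 c1_0 mulr0 subrr mulr0 add0r mulr_sumr -big_split /= -sumrN.
apply: eq_bigr => j _.
rewrite hL -mulmxA /sigma !(c0M, c1M, c0W, c1W).
ring.
Qed.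

Lemma drift0_RI (R : rcfType) (L : 'I_3 -> 'M[R[i]]_2) (hL : forall j, selfadj (L j)) x y :
  complex.Re (drift 0 L (Complex x y)) = - \sum_(j < 3)
     (complex.Re (sigma L j (Complex x y)) * ((L0v L j + L1v L j)/2 + L0v L j + x * LRv L j - y * LIv L j)
      - complex.Im (sigma L j (Complex x y)) * (y * LRv L j + x * LIv L j))
  /\ complex.Im (drift 0 L (Complex x y)) = - \sum_(j < 3)
     (complex.Re (sigma L j (Complex x y)) * (y * LRv L j + x * LIv L j)
      + complex.Im (sigma L j (Complex x y)) * ((L0v L j + L1v L j)/2 + L0v L j + x * LRv L j - y * LIv L j)).
Proof.
rewrite drift0E // cReN cImN cRe_sum cIm_sum; split; congr (- _); apply: eq_bigr => j _;
rewrite ?cReM ?cImM (E00 (hL j)) (E11 (hL j)) (E01 (L j)) /L0v /L1v /LRv /LIv inv2C;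
move: (sigma _ _ _) => s;
rewrite !(cReD, cImD, cReN, cImN, cReM, cImM, cReC, cImC, cRe1, cIm1); ring.
Qed.

Lemma cE (R : rcfType) (z : R[i]) : z = Complex (complex.Re z) (complex.Im z).
Proof. by case: z. Qed.

Lemma hdotE (R : rcfType) (u v : 'cV[R[i]]_2) : hdot u v = conjc (c0 u) * c0 v + conjc (c1 u) * c1 v.
Proof.
rewrite /hdot /c0 /c1 big_ord_recr big_ord1 /=.
by have -> : widen_ord (leqnSn 1) ord0 = ord0 :> 'I_2 by apply/val_inj.
Qed.

Lemma expectE (R : rcfType) (L : 'I_3 -> 'M[R[i]]_2) (hL : forall j, selfadj (L j)) j x y :
  expect (L j + adj (L j)) (Wvec (Complex x y)) =
  Complex (2 * (L0v L j + 2 * (x * LRv L j - y * LIv L j) + L1v L j * (x^+2 + y^+2))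
           / (1 + x^+2 + y^+2)) 0.
Proof.
rewrite /expect hL.
have -> : hdot (Wvec (Complex x y)) ((L j + L j) *m Wvec (Complex x y)) =
   Complex (2 * (L0v L j + 2 * (x * LRv L j - y * LIv L j) + L1v L j * (x^+2 + y^+2))) 0.
  rewrite hdotE c0M c1M c0W c1W !mxE (E00 (hL j)) (E11 (hL j)) (E10 (hL j)) (E01 (L j)).
  rewrite /L0v /L1v /LRv /LIv.
  move: (complex.Re _) (complex.Re _) (complex.Re _) (complex.Im _) => a d p q.
  rewrite [LHS]cE.
  rewrite !(cReD, cImD, cReN, cImN, cReM, cImM, cReC, cImC, cRe1, cIm1, cReJ, cImJ).
  by congr Complex; ring.
have -> : hdot (Wvec (Complex x y)) (Wvec (Complex x y)) = Complex (1 + x^+2 + y^+2) 0.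
  rewrite hdotE c0W c1W [LHS]cE.
  rewrite !(cReD, cImD, cReN, cImN, cReM, cImM, cReC, cImC, cRe1, cIm1, cReJ, cImJ).
  by congr Complex; ring.
by rewrite !complexr0 -fmorph_div.
Qed.

Lemma dot3C (R : rcfType) (u v : 'I_3 -> R) : dot3 u v = dot3 v u.
Proof. by apply: eq_bigr => j _; rewrite mulrC. Qed.

Lemma bil (R : rcfType) (f g h k1 k2 k3 : 'I_3 -> R) a1 b1 c1 a2 b2 c2 :
  \sum_(j < 3) (a1 * f j + b1 * g j + c1 * h j) * (a2 * k1 j + b2 * k2 j + c2 * k3 j)
  = a1*a2*dot3 f k1 + a1*b2*dot3 f k2 + a1*c2*dot3 f k3
  + b1*a2*dot3 g k1 + b1*b2*dot3 g k2 + b1*c2*dot3 g k3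
  + c1*a2*dot3 h k1 + c1*b2*dot3 h k2 + c1*c2*dot3 h k3.
Proof. rewrite /dot3 !big_ord_recr !big_ord0 /=. ring. Qed.

Lemma so_eq (R : rcfType) (L : 'I_3 -> 'M[R[i]]_2) x y Sxx Sxy Syy :
  second_order L x y Sxx Sxy Syy = 2^-1 * (
     Sxx * \sum_(j < 3) complex.Re (sigma L j (Complex x y)) * complex.Re (sigma L j (Complex x y))
   + 2 * Sxy * \sum_(j < 3) complex.Re (sigma L j (Complex x y)) * complex.Im (sigma L j (Complex x y))
   + Syy * \sum_(j < 3) complex.Im (sigma L j (Complex x y)) * complex.Im (sigma L j (Complex x y))).
Proof. rewrite /second_order !big_ord_recr !big_ord0 /=. ring. Qed.

Lemma fromdiv (R : rcfType) (a b r : R) : b != 0 -> a / b = r -> a = r * b.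
Proof. by move=> hb <-; rewrite divfK. Qed.

Lemma ortho_iff (R : rcfType) (u1 u2 u3 : 'I_3 -> R) :
  orthonormal_upto u1 u2 u3 <-> exists g, 0 < g /\ dot3 u1 u1 = g /\ dot3 u2 u2 = g /\
     dot3 u3 u3 = g /\ dot3 u1 u2 = 0 /\ dot3 u1 u3 = 0 /\ dot3 u2 u3 = 0.
Proof.
split.
  move=> [c [hc H]]; simpl in H.
  have hc2 : c ^+ 2 != 0 by rewrite expf_neq0.
  have e1 := H ord0 ord0; have e2 := H (@Ordinal 3 1 isT) (@Ordinal 3 1 isT);
  have e3 := H (@Ordinal 3 2 isT) (@Ordinal 3 2 isT); have e4 := H ord0 (@Ordinal 3 1 isT);
  have e5 := H ord0 (@Ordinal 3 2 isT); have e6 := H (@Ordinal 3 1 isT) (@Ordinal 3 2 isT).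
  rewrite /= !dotscale // in e1 e2 e3 e4 e5 e6.
  move: (fromdiv hc2 e1) (fromdiv hc2 e2) (fromdiv hc2 e3) (fromdiv hc2 e4) (fromdiv hc2 e5) (fromdiv hc2 e6).
  rewrite !mul1r !mul0r => ? ? ? ? ? ?.
  exists (c^+2); split; first by rewrite exprn_even_gt0.
  by repeat split.
move=> [g [hg [h11 [h22 [h33 [h12 [h13 h23]]]]]]].
have hc : Num.sqrt g != 0 by rewrite sqrtr_eq0 -ltNge.
exists (Num.sqrt g); split; first exact: hc.
simpl; move=> k l.
rewrite /= dotscale // sqr_sqrtr ?ltW //.
case: k => [[|[|[|k]]] hk] //; case: l => [[|[|[|l]]] hl] //=;
  rewrite ?h11 ?h22 ?h33 ?h12 ?h13 ?h23 ?(dot3C u2 u1) ?(dot3C u3 u1) ?(dot3C u3 u2) ?h12 ?h13 ?h23 ?mul0r ?divff //;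
  by rewrite gt_eqF.
Qed.

Lemma SRR (R : rcfType) (L : 'I_3 -> 'M[R[i]]_2) (hL : forall j, selfadj (L j)) x y :
  \sum_(j < 3) complex.Re (sigma L j (Complex x y)) * complex.Re (sigma L j (Complex x y)) =
  \sum_(j < 3) ((1 - x^+2 + y^+2) * LRv L j + (2*x) * Ldelta L j + (2*x*y) * LIv L j)
              * ((1 - x^+2 + y^+2) * LRv L j + (2*x) * Ldelta L j + (2*x*y) * LIv L j).
Proof. by apply: eq_bigr => j _; have [-> _] := sigma_RI hL j x y. Qed.
Lemma SRI (R : rcfType) (L : 'I_3 -> 'M[R[i]]_2) (hL : forall j, selfadj (L j)) x y :
  \sum_(j < 3) complex.Re (sigma L j (Complex x y)) * complex.Im (sigma L j (Complex x y)) =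
  \sum_(j < 3) ((1 - x^+2 + y^+2) * LRv L j + (2*x) * Ldelta L j + (2*x*y) * LIv L j)
              * ((-2*x*y) * LRv L j + (2*y) * Ldelta L j + (-(1 + x^+2 - y^+2)) * LIv L j).
Proof. apply: eq_bigr => j _; have [-> ->] := sigma_RI hL j x y; ring. Qed.
Lemma SII (R : rcfType) (L : 'I_3 -> 'M[R[i]]_2) (hL : forall j, selfadj (L j)) x y :
  \sum_(j < 3) complex.Im (sigma L j (Complex x y)) * complex.Im (sigma L j (Complex x y)) =
  \sum_(j < 3) ((-2*x*y) * LRv L j + (2*y) * Ldelta L j + (-(1 + x^+2 - y^+2)) * LIv L j)
              * ((-2*x*y) * LRv L j + (2*y) * Ldelta L j + (-(1 + x^+2 - y^+2)) * LIv L j).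
Proof. apply: eq_bigr => j _; have [_ ->] := sigma_RI hL j x y; ring. Qed.

Lemma bilO (R : rcfType) (f g h : 'I_3 -> R) G a1 b1 c1 a2 b2 c2 :
  dot3 f f = G -> dot3 g g = G -> dot3 h h = G -> dot3 g f = 0 -> dot3 g h = 0 -> dot3 f h = 0 ->
  \sum_(j < 3) (a1 * f j + b1 * g j + c1 * h j) * (a2 * f j + b2 * g j + c2 * h j)
  = G * (a1*a2 + b1*b2 + c1*c2).
Proof.
move=> h1 h2 h3 h4 h5 h6; rewrite bil (dot3C f g) (dot3C h f) (dot3C h g) h1 h2 h3 h4 h5 h6; ring.
Qed.

Definition Gram (R : rcfType) (L : 'I_3 -> 'M[R[i]]_2) g :=
  dot3 (Ldelta L) (Ldelta L) = g /\ dot3 (LRv L) (LRv L) = g /\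
  dot3 (LIv L) (LIv L) = g /\ dot3 (Ldelta L) (LRv L) = 0 /\ dot3 (Ldelta L) (LIv L) = 0 /\
  dot3 (LRv L) (LIv L) = 0.

Lemma so_gram (R : rcfType) (L : 'I_3 -> 'M[R[i]]_2) (hL : forall j, selfadj (L j)) g :
  Gram L g -> forall x y Sxx Sxy Syy,
  second_order L x y Sxx Sxy Syy = g / 2 * (1 + x ^+ 2 + y ^+ 2) ^+ 2 * (Sxx + Syy).
Proof.
move=> [h1 [h2 [h3 [h4 [h5 h6]]]]] x y Sxx Sxy Syy.
rewrite so_eq SRR // SRI // SII // !(bilO _ _ _ _ _ _ h2 h1 h3 h4 h5 h6).
by field.
Qed.

Lemma iso_gram (R : rcfType) (L : 'I_3 -> 'M[R[i]]_2) (hL : forall j, selfadj (L j)) :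
  second_order_isothermic L -> exists g, 0 < g /\ Gram L g.
Proof.
move=> [om [hom H]].
have key x y :
  \sum_(j < 3) complex.Re (sigma L j (Complex x y)) * complex.Re (sigma L j (Complex x y)) =
  \sum_(j < 3) complex.Im (sigma L j (Complex x y)) * complex.Im (sigma L j (Complex x y)) /\
  \sum_(j < 3) complex.Re (sigma L j (Complex x y)) * complex.Im (sigma L j (Complex x y)) = 0 /\
  0 < \sum_(j < 3) complex.Re (sigma L j (Complex x y)) * complex.Re (sigma L j (Complex x y)).
  have := H x y 1 0 0; have := H x y 0 1 0; have := H x y 0 0 1; rewrite !so_eq; have := hom x y.
  move: (\sum_(j < 3) _) (\sum_(j < 3) _) (\sum_(j < 3) _) (om x y) => A B C o.
  lra.
have := key 0 0; have := key 1 0; have := key 0 1.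
rewrite !SRR // !SRI // !SII // !bil.
rewrite (dot3C (LRv L) (Ldelta L)) (dot3C (LIv L) (Ldelta L)) (dot3C (LIv L) (LRv L)).
rewrite /Gram !expr0n /= !expr1n => -[k1 [k2 k3]] [k4 [k5 k6]] [k7 [k8 k9]].
exists (dot3 (LRv L) (LRv L)).
by repeat split; lra.
Qed.

Lemma complete3 (R : rcfType) (v : 'I_3 -> 'I_3 -> R) (m : 'I_3 -> R) g : 0 < g ->
  (forall k l, dot3 (v k) (v l) = g * (k == l)%:R) -> (forall k, dot3 (v k) m = 0) ->
  forall j, m j = 0.
Proof.
move=> hg hv hm j.
pose U : 'M[R]_3 := \matrix_(k, i) v k i.
pose M : 'cV[R]_3 := \col_i m i.
have hUU : U *m (g^-1 *: U^T) = 1%:M.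
  apply/matrixP => k l; rewrite -scalemxAr !mxE.
  have -> : \sum_(i < 3) U k i * U^T i l = dot3 (v k) (v l).
    by apply: eq_bigr => i _; rewrite !mxE.
  rewrite hv; case: (k == l) => /=; rewrite ?mulr1 ?mulr0 ?mulVf //; by rewrite gt_eqF.
have hUM : U *m M = 0.
  apply/matrixP => k l; rewrite !mxE; transitivity (dot3 (v k) m); last exact: hm k.
  by apply: eq_bigr => i _; rewrite !mxE.
have := mulmx1C hUU => hUU'.
have : M = 0 by rewrite -[M]mul1mx -hUU' -mulmxA hUM mulmx0.
by move/matrixP => /(_ j ord0); rewrite !mxE.
Qed.

Lemma lin3 (R : rcfType) (f g h k : 'I_3 -> R) a1 b1 c1 :
  \sum_(j < 3) (a1 * f j + b1 * g j + c1 * h j) * k j = a1 * dot3 f k + b1 * dot3 g k + c1 * dot3 h k.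
Proof. rewrite /dot3 !big_ord_recr !big_ord0 /=. ring. Qed.

Lemma SRlin (R : rcfType) (L : 'I_3 -> 'M[R[i]]_2) (hL : forall j, selfadj (L j)) g :
  Gram L g -> forall x y a2 b2 c2,
  \sum_(j < 3) complex.Re (sigma L j (Complex x y)) * (a2 * LRv L j + b2 * Ldelta L j + c2 * LIv L j)
  = g * ((1 - x^+2 + y^+2) * a2 + (2*x) * b2 + (2*x*y) * c2).
Proof.
move=> [h1 [h2 [h3 [h4 [h5 h6]]]]] x y a2 b2 c2.
rewrite -(bilO _ _ _ _ _ _ h2 h1 h3 h4 h5 h6).
by apply: eq_bigr => j _; have [-> _] := sigma_RI hL j x y.
Qed.

Lemma SIlin (R : rcfType) (L : 'I_3 -> 'M[R[i]]_2) (hL : forall j, selfadj (L j)) g :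
  Gram L g -> forall x y a2 b2 c2,
  \sum_(j < 3) complex.Im (sigma L j (Complex x y)) * (a2 * LRv L j + b2 * Ldelta L j + c2 * LIv L j)
  = g * ((-2*x*y) * a2 + (2*y) * b2 + (-(1 + x^+2 - y^+2)) * c2).
Proof.
move=> [h1 [h2 [h3 [h4 [h5 h6]]]]] x y a2 b2 c2.
rewrite -(bilO _ _ _ _ _ _ h2 h1 h3 h4 h5 h6).
by apply: eq_bigr => j _; have [_ ->] := sigma_RI hL j x y; ring.
Qed.

Lemma SRm (R : rcfType) (L : 'I_3 -> 'M[R[i]]_2) (hL : forall j, selfadj (L j)) x y (k : 'I_3 -> R) :
  \sum_(j < 3) complex.Re (sigma L j (Complex x y)) * k j
  = (1 - x^+2 + y^+2) * dot3 (LRv L) k + (2*x) * dot3 (Ldelta L) k + (2*x*y) * dot3 (LIv L) k.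
Proof.
rewrite -lin3; by apply: eq_bigr => j _; have [-> _] := sigma_RI hL j x y.
Qed.

Lemma SIm (R : rcfType) (L : 'I_3 -> 'M[R[i]]_2) (hL : forall j, selfadj (L j)) x y (k : 'I_3 -> R) :
  \sum_(j < 3) complex.Im (sigma L j (Complex x y)) * k j
  = (-2*x*y) * dot3 (LRv L) k + (2*y) * dot3 (Ldelta L) k + (-(1 + x^+2 - y^+2)) * dot3 (LIv L) k.
Proof.
rewrite -lin3; by apply: eq_bigr => j _; have [_ ->] := sigma_RI hL j x y; ring.
Qed.

Lemma drift_gram (R : rcfType) (L : 'I_3 -> 'M[R[i]]_2) (hL : forall j, selfadj (L j)) g :
  Gram L g -> forall x y,
  complex.Re (drift 0 L (Complex x y)) =
    - (2 * \sum_(j < 3) complex.Re (sigma L j (Complex x y)) * ((L0v L j + L1v L j) / 2)) /\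
  complex.Im (drift 0 L (Complex x y)) =
    - (2 * \sum_(j < 3) complex.Im (sigma L j (Complex x y)) * ((L0v L j + L1v L j) / 2)).
Proof.
move=> G x y; have [-> ->] := drift0_RI hL x y.
have e1 := SRlin hL G x y x (-1) (-y).
have e2 := SIlin hL G x y y 0 x.
have e3 := SRlin hL G x y y 0 x.
have e4 := SIlin hL G x y x (-1) (-y).
split; congr (- _).
  transitivity (2 * \sum_(j < 3) complex.Re (sigma L j (Complex x y)) * ((L0v L j + L1v L j) / 2)
     + \sum_(j < 3) complex.Re (sigma L j (Complex x y)) * (x * LRv L j + (-1) * Ldelta L j + (-y) * LIv L j)
     - \sum_(j < 3) complex.Im (sigma L j (Complex x y)) * (y * LRv L j + 0 * Ldelta L j + x * LIv L j)).
    rewrite mulr_sumr -big_split -sumrB /=; apply: eq_bigr => j _; rewrite /Ldelta; by field.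
  rewrite e1 e2; ring.
transitivity (\sum_(j < 3) complex.Re (sigma L j (Complex x y)) * (y * LRv L j + 0 * Ldelta L j + x * LIv L j)
   + 2 * \sum_(j < 3) complex.Im (sigma L j (Complex x y)) * ((L0v L j + L1v L j) / 2)
   + \sum_(j < 3) complex.Im (sigma L j (Complex x y)) * (x * LRv L j + (-1) * Ldelta L j + (-y) * LIv L j)).
  rewrite mulr_sumr -!big_split /=; apply: eq_bigr => j _; rewrite /Ldelta; by field.
rewrite e3 e4; ring.
Qed.

Lemma innov_gram (R : rcfType) (L : 'I_3 -> 'M[R[i]]_2) (hL : forall j, selfadj (L j)) g :
  Gram L g -> (forall j, L0v L j = - L1v L j) -> forall x y,
  drift_innov 0 L (Complex x y) = drift 0 L (Complex x y).
Proof.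
move=> G hm x y.
rewrite /drift_innov; suff -> : \sum_(j < 3) sigma L j (Complex x y) * expect (L j + adj (L j)) (Wvec (Complex x y)) = 0 by rewrite addr0.
rewrite [LHS]cE cRe_sum cIm_sum.
have hD : 1 + x^+2 + y^+2 != 0 :> R.
  by rewrite gt_eqF // -addrA ltr_pwDl // addr_ge0 // sqr_ge0.
have -> : \sum_(j < 3) complex.Re (sigma L j (Complex x y) * expect (L j + adj (L j)) (Wvec (Complex x y)))
  = (\sum_(j < 3) complex.Re (sigma L j (Complex x y)) *
       ((4 * x) * LRv L j + (2 * (x^+2 + y^+2 - 1)) * Ldelta L j + (- 4 * y) * LIv L j)) / (1 + x^+2 + y^+2).
  rewrite mulr_suml; apply: eq_bigr => j _.
  rewrite expectE // cReM cReC cImC /Ldelta hm; by field.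
have -> : \sum_(j < 3) complex.Im (sigma L j (Complex x y) * expect (L j + adj (L j)) (Wvec (Complex x y)))
  = (\sum_(j < 3) complex.Im (sigma L j (Complex x y)) *
       ((4 * x) * LRv L j + (2 * (x^+2 + y^+2 - 1)) * Ldelta L j + (- 4 * y) * LIv L j)) / (1 + x^+2 + y^+2).
  rewrite mulr_suml; apply: eq_bigr => j _.
  rewrite expectE // cImM cReC cImC /Ldelta hm; by field.
rewrite (SRlin hL G) (SIlin hL G).
congr Complex; apply/eqP; rewrite mulf_eq0; apply/orP; left; apply/eqP; ring.
Qed.

Lemma drift_zero (R : rcfType) (L : 'I_3 -> 'M[R[i]]_2) (hL : forall j, selfadj (L j)) g :
  Gram L g -> (forall j, L0v L j = - L1v L j) -> forall x y,
  complex.Re (drift 0 L (Complex x y)) = 0 /\ complex.Im (drift 0 L (Complex x y)) = 0.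
Proof.
move=> G hm x y; have [-> ->] := drift_gram hL G x y.
by rewrite !big1 ?mulr0 ?oppr0 // => j _; rewrite hm addNr mul0r mulr0.
Qed.

Lemma drift_m (R : rcfType) (L : 'I_3 -> 'M[R[i]]_2) (hL : forall j, selfadj (L j)) g :
  0 < g -> Gram L g ->
  (forall x y, complex.Re (drift 0 L (Complex x y)) = 0 /\ complex.Im (drift 0 L (Complex x y)) = 0) ->
  forall j, L0v L j = - L1v L j.
Proof.
move=> hg G hd.
pose mm j := (L0v L j + L1v L j) / 2.
have k1 x y : \sum_(j < 3) complex.Re (sigma L j (Complex x y)) * mm j = 0.
  have [h _] := hd x y; have [h' _] := drift_gram hL G x y.
  rewrite h' in h; move: h; rewrite /mm; move: (\sum_(j < 3) _) => s; lra.
have k2 x y : \sum_(j < 3) complex.Im (sigma L j (Complex x y)) * mm j = 0.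
  have [_ h] := hd x y; have [_ h'] := drift_gram hL G x y.
  rewrite h' in h; move: h; rewrite /mm; move: (\sum_(j < 3) _) => s; lra.
have a1 := k1 0 0; have a2 := k1 1 0; have a3 := k2 0 0.
rewrite !SRm // !SIm // !expr0n !expr1n /= in a1 a2 a3.
have dp : dot3 (LRv L) mm = 0 by lra.
have dd : dot3 (Ldelta L) mm = 0 by lra.
have dq : dot3 (LIv L) mm = 0 by lra.
pose v (k : 'I_3) := if (k : nat) == 0%N then Ldelta L else if (k : nat) == 1%N then LRv L else LIv L.
have hv : forall k l, dot3 (v k) (v l) = g * (k == l)%:R.
  move: G => [h1 [h2 [h3 [h4 [h5 h6]]]]].
  case=> [[|[|[|k]]] hk] //; case=> [[|[|[|l]]] hl] //=; rewrite /v /= ?mulr1 ?mulr0 //;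
  by rewrite ?(dot3C (LRv L) (Ldelta L)) ?(dot3C (LIv L) (Ldelta L)) ?(dot3C (LIv L) (LRv L)).
have hmv : forall k, dot3 (v k) mm = 0.
  by case=> [[|[|[|k]]] hk] //.
move=> j; have := complete3 hg hv hmv j; rewrite /mm => h; lra.
Qed.

Lemma ortho_gram (R : rcfType) (L : 'I_3 -> 'M[R[i]]_2) :
  orthonormal_upto (Ldelta L) (LRv L) (LIv L) <-> exists g, 0 < g /\ Gram L g.
Proof. exact: ortho_iff. Qed.

Lemma pos_om (R : rcfType) (g x y : R) : 0 < g -> 0 < g / 2 * (1 + x ^+ 2 + y ^+ 2) ^+ 2.
Proof.
move=> hg; apply: mulr_gt0; first by apply: divr_gt0.
have hp : 0 < 1 + x ^+ 2 + y ^+ 2 by have := sqr_ge0 x; have := sqr_ge0 y; lra.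
by apply: exprn_gt0.
Qed.

Unset Implicit Arguments.
Set Strict Implicit.
Theorem proposition3p2 (R : rcfType) (H : 'M[R[i]]_2) (L : 'I_3 -> 'M[R[i]]_2)
  (hH : selfadj H) (hL : forall j, selfadj (L j)) :
  (* (i) *)
  ((second_order_isothermic L <->
      orthonormal_upto (Ldelta L) (LRv L) (LIv L))
   /\ (second_order_isothermic L ->
      exists c : R, forall x y Sxx Sxy Syy,
        second_order L x y Sxx Sxy Syy
        = c * (1 + x ^+ 2 + y ^+ 2) ^+ 2 * (Sxx + Syy)))
  /\
  (* (ii), H = 0 *)
  ((generator_isothermic 0 L <->
      (orthonormal_upto (Ldelta L) (LRv L) (LIv L)
       /\ forall j, L0v L j = - L1v L j))
   /\ (orthonormal_upto (Ldelta L) (LRv L) (LIv L) ->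
       (forall j, L0v L j = - L1v L j) ->
       forall x y Sx Sy Sxx Sxy Syy,
         generator 0 L x y Sx Sy Sxx Sxy Syy
         = generator_innov 0 L x y Sx Sy Sxx Sxy Syy)).
Proof.
have iso_ortho : second_order_isothermic L <-> orthonormal_upto (Ldelta L) (LRv L) (LIv L).
  rewrite ortho_gram; split; first exact: iso_gram.
  move=> [g [hg G]]; exists (fun x y => g / 2 * (1 + x ^+ 2 + y ^+ 2) ^+ 2); split.
    by move=> x y; apply: pos_om.
  by move=> x y Sxx Sxy Syy; rewrite (so_gram hL G).
split; first split.
- exact: iso_ortho.
- move/iso_ortho/ortho_gram => [g [hg G]]; exists (g / 2) => x y Sxx Sxy Syy.
  exact: (so_gram hL G).
split.
  split.
    move=> [om [hom Hg]].
    have iso : second_order_isothermic L.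
      exists om; split => // x y Sxx Sxy Syy.
      have := Hg x y 0 0 Sxx Sxy Syy; rewrite /generator /generator_b !mulr0 !add0r //.
    have ho := iso; move/iso_ortho: ho => ho; split => //.
    move/ortho_gram: ho => [g [hg G]].
    apply: (drift_m hL hg G) => x y.
    have := Hg x y 1 0 0 0 0; have := Hg x y 0 1 0 0 0.
    rewrite /generator /generator_b !(so_gram hL G) !(mulr0, mulr1, addr0, add0r).
    by move=> -> ->.
  move=> [ho hm]; move/ortho_gram: ho => [g [hg G]].
  exists (fun x y => g / 2 * (1 + x ^+ 2 + y ^+ 2) ^+ 2); split.
    by move=> x y; apply: pos_om.
  move=> x y Sx Sy Sxx Sxy Syy.
  have [e1 e2] := drift_zero hL G hm x y.
  by rewrite /generator /generator_b e1 e2 (so_gram hL G) !mul0r !add0r.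
move=> /ortho_gram [g [hg G]] hm x y Sx Sy Sxx Sxy Syy.
by rewrite /generator /generator_innov /generator_b (innov_gram hL G hm).
Qed.
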